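(* Let $P$ be an $n\times n$ doubly stochastic matrix. Then $P$ is a Sarymsakov matrix if and only if $|F_P(\mathcal A)|>|\mathcal A|$ for every nonempty proper subset $\mathcal A\subsetneq\mathcal N$.
   Context: $\mathcal N=\{1,\ldots,n\}$. A matrix is stochastic if it is entrywise nonnegative with row sums $1$, and doubly stochastic if in addition its column sums are $1$. For stochastic $P$ and $\mathcal A\subseteq\mathcal N$, $F_P(\mathcal A)=\{j:\ p_{ij}>0\text{ for some } i\in\mathcal A\}$. A Sarymsakov matrix is a stochastic $P$ such that for any disjoint nonempty $\mathcal A,\tilde{\mathcal A}\subseteq\mathcal N$, either $F_P(\mathcal A)\cap F_P(\tilde{\mathcal A})\neq\emptyset$, or $F_P(\mathcal A)\cap F_P(\tilde{\mathcal A})=\emptyset$ and $|F_P(\mathcal A)\cup F_P(\tilde{\mathcal A})|>|\mathcal A\cup\tilde{\mathcal A}|$. *)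

(* Defs.v *)
From HB Require Import structures.
From mathcomp Require Import all_boot all_order all_algebra.
Set Implicit Arguments. Unset Strict Implicit. Unset Printing Implicit Defensive.
Import Order.TTheory GRing.Theory Num.Theory.
Local Open Scope ring_scope.

Definition stochastic (R : realFieldType) (n : nat) (P : 'M[R]_n) : Prop :=
  (forall i j, 0 <= P i j) /\ (forall i, \sum_(j < n) P i j = 1).

Definition doubly_stochastic (R : realFieldType) (n : nat) (P : 'M[R]_n) : Prop :=
  stochastic P /\ (forall j, \sum_(i < n) P i j = 1).

Definition F (R : realFieldType) (n : nat) (P : 'M[R]_n) (A : {set 'I_n}) : {set 'I_n} :=
  [set j | [exists i in A, 0 < P i j]].

Definition sarymsakov (R : realFieldType) (n : nat) (P : 'M[R]_n) : Prop :=
  stochastic P /\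
  forall A At : {set 'I_n}, A != set0 -> At != set0 -> [disjoint A & At] ->
    (F P A :&: F P At != set0) \/
    (F P A :&: F P At = set0 /\ (#|A :|: At| < #|F P A :|: F P At|)%N).

(* Main.v *)
Require Import Defs.
From mathcomp Require Import all_boot all_order all_algebra.
Set Implicit Arguments. Unset Strict Implicit. Unset Printing Implicit Defensive.
Import Order.TTheory GRing.Theory Num.Theory.
Local Open Scope ring_scope.

Section S.
Variables (R : realFieldType) (n : nat) (P : 'M[R]_n).

Lemma F_U (A B : {set 'I_n}) : F P (A :|: B) = F P A :|: F P B.
Proof.
apply/setP=> j; rewrite !inE; apply/existsP/orP.
- by case=> i /andP[]; rewrite inE => /orP[] Hi Hp; [left|right];
    apply/existsP; exists i; rewrite Hi.
- by case=> /existsP[i /andP[Hi Hp]]; exists i; rewrite inE Hi ?orbT.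
Qed.

Lemma keyF (A : {set 'I_n}) : doubly_stochastic P ->
  (#|F P A|%:R : R) = #|A|%:R + \sum_(j in F P A) \sum_(i in ~: A) P i j.
Proof.
move=> [[P0 Prow] Pcol].
have E1 : \sum_(i in A) \sum_(j in F P A) P i j = (#|A|%:R : R).
  rewrite -sum1_card natr_sum; apply: eq_bigr => i iA.
  rewrite -(Prow i) [RHS](bigID (fun j => j \in F P A)) /= [X in _ = _ + X]big1 ?addr0 //.
  move=> j; rewrite inE => /existsP Hn.
  apply/eqP; rewrite eq_le P0 andbT leNgt; apply/negP => Hp; apply: Hn.
  by exists i; rewrite iA.
have E2 : \sum_(j in F P A) \sum_i P i j = (#|F P A|%:R : R).
  rewrite -sum1_card natr_sum; apply: eq_bigr => j _; exact: Pcol.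
rewrite -E2 -E1 [X in _ = X + _]exchange_big /= -big_split /=; apply: eq_bigr => j _.
by rewrite [LHS](bigID (fun i => i \in A)) /=; congr (_ + _);
  apply: eq_bigl => i; rewrite ?inE.
Qed.

Lemma Fge (A : {set 'I_n}) : doubly_stochastic P -> (#|A| <= #|F P A|)%N.
Proof.
move=> H; have := keyF A H => E.
rewrite -(ler_nat R) E lerDl; apply: sumr_ge0 => j _; apply: sumr_ge0 => i _.
by case: H => [[P0 _] _].
Qed.

Lemma Fgt (A : {set 'I_n}) : doubly_stochastic P ->
  F P A :&: F P (~: A) != set0 -> (#|A| < #|F P A|)%N.
Proof.
move=> H /set0Pn [j]; rewrite inE => /andP[jA]; rewrite inE => /existsP[i /andP[iA Pij]].
have P0 : forall i j, 0 <= P i j by case: H => [[]].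
rewrite -(ltr_nat R) (keyF A H) ltrDl.
rewrite (bigD1 j) //= ltr_wpDr //; first by apply: sumr_ge0 => k _; apply: sumr_ge0.
by rewrite (bigD1 i) //= ltr_wpDr //; apply: sumr_ge0.
Qed.

End S.

Theorem lemma5 (R : realFieldType) (n : nat) (P : 'M[R]_n) :
  doubly_stochastic P ->
  (sarymsakov P <->
   forall A : {set 'I_n}, A != set0 -> A \proper [set: 'I_n] ->
     (#|A| < #|F P A|)%N).
Proof.
move=> H; split.
- move=> [_ Hs] A An0 Apr.
  have Cn0 : ~: A != set0.
    apply/set0Pn; move: Apr; rewrite properT => /negP Hn.
    case: (pickP (fun x => x \notin A)) => [x Hx|Hx]; first by exists x; rewrite inE.
    by exfalso; apply: Hn; apply/eqP/setP => x; rewrite inE; move: (Hx x) => /= /negbFE.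
  have Dis : [disjoint A & ~: A] by rewrite disjoints_subset setCK.
  case: (Hs A (~: A) An0 Cn0 Dis) => [Hne|[Heq Hlt]]; first exact: (Fgt H Hne).
  exfalso; move: Hlt; rewrite setUCr cardsT card_ord ltnNge.
  by rewrite -[X in (_ <= X)%N](card_ord n) max_card.
- move=> Hf; split; first by case: H.
  move=> A B An0 Bn0 Dis.
  case: (boolP (F P A :&: F P B == set0)) => [/eqP E|]; last by left.
  right; split => //.
  case: (boolP ((A :|: B) \proper [set: 'I_n])) => Hp.
  + rewrite -F_U; apply: Hf => //; apply/set0Pn.
    by case/set0Pn: An0 => x Hx; exists x; rewrite inE Hx.
  + exfalso.
    have Ap : A \proper [set: 'I_n].
      rewrite properT; apply/negP => /eqP AT.
      case/set0Pn: Bn0 => x Hx; move: Dis; rewrite disjoint_sym disjoints_subset.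
      by move=> /subsetP /(_ x Hx); rewrite AT !inE.
    have Bp : B \proper [set: 'I_n].
      rewrite properT; apply/negP => /eqP BT.
      case/set0Pn: An0 => x Hx; move: Dis; rewrite disjoints_subset.
      by move=> /subsetP /(_ x Hx); rewrite BT !inE.
    have h1 := Hf A An0 Ap; have h2 := Hf B Bn0 Bp.
    have c1 := cardsUI A B; have c2 := cardsUI (F P A) (F P B).
    move: Dis; rewrite -setI_eq0 => /eqP D.
    rewrite D E cards0 !addn0 in c1 c2.
    move: Hp; rewrite properT negbK => /eqP UT.
    rewrite UT cardsT card_ord in c1.
    have : (#|F P A :|: F P B| <= n)%N by rewrite -[X in (_ <= X)%N](card_ord n) max_card.
    rewrite c2 => hle; have : (#|A| + #|B| < #|F P A| + #|F P B|)%N.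
      by apply: leq_trans (leq_add h1 (ltnW h2)); rewrite addSn.
    by rewrite -c1 ltnNge hle.
Qed.
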